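(* Assume (A7) and (A8) of the context. Then for every $\delta\in\mathbb{R}^D$ with $\|\delta\|\le\|\theta^*\|$, with probability $1-\delta_{n_q}$, $\|\nabla^2_\theta\ell(\theta^*+\delta)\|\le 2C_{\mathrm{ratio}}D_{\max,2}$.
   Context: Let $E=\{(u,v):1\le v\le u\le m\}$, $D=b|E|$, $\psi:\mathbb{R}^2\to\mathbb{R}^b$, and $f:\mathbb{R}^m\to\mathbb{R}^D$ the concatenation of the blocks $f_t(x)=\psi(x_u,x_v)$, $t=(u,v)\in E$; $f_S$ is the subvector of blocks in $S\subseteq E$. $P,Q$ are distributions on $\mathbb{R}^m$ with densities $p,q$; samples $x_p^{(1..n_p)}$ i.i.d. $P$ and $x_q^{(1..n_q)}$ i.i.d. $Q$. $r(x;\theta)=\exp(\theta^\top f(x))/N(\theta)$, $N(\theta)=\mathbb{E}_Q[\exp(\theta^\top f(x))]$; $\hat N(\theta)=\frac1{n_q}\sum_i\exp(\theta^\top f(x_q^{(i)}))$; $\hat r(x;\theta)=\exp(\theta^\top f(x))/\hat N(\theta)$; $\ell(\theta)=-\frac1{n_p}\sum_i\theta^\top f(x_p^{(i)})+\log\hat N(\theta)$. $\theta^*$ is the true parameter ($p=q\,r(\cdot;\theta^* )$), $S=\{t:\theta^*_t\neq0\}$. $\|\cdot\|$: Euclidean norm on vectors, spectral norm on matrices; $\Lambda_{\min}$ smallest eigenvalue. (A7) For all $\delta$ with $\|\delta\|\le\|\theta^*\|$ and all $x$: $0<C_{\min}\le r(x;\theta^*+\delta)\le C_{\max}<\infty$;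 moreover $\frac1{C_{\mathrm{ratio}}}\le\hat r(x;\theta^*+\delta)\le C_{\mathrm{ratio}}$ and $\|f_t(x)\|\le C_{f_t,\max}$ for constants. (A8) With probability 1: $\max_{t\in E}\frac1{n_q}\sum_i\|f_t(x_q^{(i)})\|\le D_{\max,1}<\infty$, $\|\frac1{n_q}\sum_if(x_q^{(i)})f(x_q^{(i)})^\top\|\le D_{\max,2}$ and $\|\widehat{\mathrm{Cov}}_q[f]\|\le D_{\max,2}<\infty$; with probability $1-\delta_{n_q}$, $\Lambda_{\min}(\widehat{\mathrm{Cov}}_q[f_S])\ge D_{\min,2}>0$; $\widehat{\mathrm{Cov}}_q$ is the sample covariance over the $Q$-sample. *)

(* Defs.v *)
From HB Require Import structures.
From mathcomp Require Import all_boot all_order all_algebra.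
From mathcomp Require Import all_classical all_reals all_analysis.
Set Implicit Arguments.
Unset Strict Implicit.
Unset Printing Implicit Defensive.
Import Order.TTheory GRing.Theory Num.Theory.
Import numFieldNormedType.Exports.
Local Open Scope classical_set_scope.
Local Open Scope ring_scope.

(* E = {(u,v) : 1 <= v <= u <= m}, here 0-indexed: v <= u < m *)
Definition Etype (m : nat) := {p : 'I_m * 'I_m | (p.2 <= p.1)%N}.
(* coordinates of theta / f(x): pairs (block t, position k in block) *)
Definition Idx (m b : nat) := (Etype m * 'I_b)%type.
Definition Dim (m b : nat) : nat := #|{: Idx m b}|.
Definition coord (m b : nat) (j : Idx m b) : 'I_(Dim m b) := enum_rank j.

Definition Rvec (R : realType) (m : nat) := 'rV[R]_m.
HB.instance Definition _ (R : realType) (m : nat) := Choice.on (Rvec R m).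
HB.instance Definition _ (R : realType) (m : nat) := isPointed.Build (Rvec R m) 0.

Definition coord_sets (R : realType) (m : nat) : set (set (Rvec R m)) :=
  fun A => exists (i : 'I_m) (B : set R), measurable B /\
                                        A = (fun x : 'rV[R]_m => x ord0 i) @^-1` B.
Notation Rm R m := (g_sigma_algebraType (@coord_sets R m)).

Definition vnorm (R : realType) (p q : nat) (M : 'M[R]_(p, q)) : R :=
  Num.sqrt (\sum_(i < p) \sum_(j < q) M i j ^+ 2).
Definition specnorm (R : realType) (n : nat) (A : 'M[R]_n) : R :=
  sup [set vnorm (A *m v) | v in [set v : 'cV[R]_n | vnorm v <= 1]].
Definition lambda_min (R : realType) (n : nat) (A : 'M[R]_n) : R :=
  inf [set a : R | eigenvalue A a].
Definition unitv (R : realType) (n : nat) (j : 'I_n) : 'rV[R]_n := delta_mx 0 j.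
Definition hessian (R : realType) (n : nat) (g : 'rV[R]_n -> R) (th : 'rV[R]_n)
  : 'M[R]_n :=
  \matrix_(j, k) derive (fun t => derive g t (@unitv R n k)) th (@unitv R n j).
Definition dotp (R : realType) (n : nat) (u v : 'rV[R]_n) : R :=
  \sum_(i < n) u ord0 i * v ord0 i.

Definition feat_t (R : realType) (m b : nat) (psi : R -> R -> 'rV[R]_b)
  (t : Etype m) (x : 'rV[R]_m) : 'rV[R]_b :=
  psi (x ord0 (sval t).1) (x ord0 (sval t).2).
Definition feat (R : realType) (m b : nat) (psi : R -> R -> 'rV[R]_b)
  (x : 'rV[R]_m) : 'rV[R]_(Dim m b) :=
  \row_(i < Dim m b) feat_t psi (enum_val i).1 x ord0 (enum_val i).2.
Definition Sidx (m b : nat) (S : {set Etype m}) : {set Idx m b} :=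
  [set j : Idx m b | j.1 \in S].
Definition subvec (R : realType) (m b : nat) (S : {set Etype m})
  (v : 'rV[R]_(Dim m b)) : 'rV[R]_#|Sidx b S| :=
  \row_(a < #|Sidx b S|) v ord0 (coord (enum_val a)).
Definition supp (R : realType) (m b : nat) (th : 'rV[R]_(Dim m b)) : {set Etype m} :=
  [set t : Etype m | [exists k : 'I_b, th ord0 (coord (t, k)) != 0]].

Definition N_model (R : realType) (m b : nat) (psi : R -> R -> 'rV[R]_b)
  (Q : probability (Rm R m) R) (th : 'rV[R]_(Dim m b)) : R :=
  Rintegral Q setT (fun x : Rm R m => expR (dotp th (feat psi x))).
Definition r_model (R : realType) (m b : nat) (psi : R -> R -> 'rV[R]_b)
  (Q : probability (Rm R m) R) (th : 'rV[R]_(Dim m b)) (x : 'rV[R]_m) : R :=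
  expR (dotp th (feat psi x)) / N_model psi Q th.
Definition Nhat (R : realType) (m b nq : nat) (psi : R -> R -> 'rV[R]_b)
  (xq : 'I_nq -> 'rV[R]_m) (th : 'rV[R]_(Dim m b)) : R :=
  (nq%:R)^-1 * \sum_(i < nq) expR (dotp th (feat psi (xq i))).
Definition rhat (R : realType) (m b nq : nat) (psi : R -> R -> 'rV[R]_b)
  (xq : 'I_nq -> 'rV[R]_m) (th : 'rV[R]_(Dim m b)) (x : 'rV[R]_m) : R :=
  expR (dotp th (feat psi x)) / Nhat psi xq th.
Definition loss (R : realType) (m b np nq : nat) (psi : R -> R -> 'rV[R]_b)
  (xp : 'I_np -> 'rV[R]_m) (xq : 'I_nq -> 'rV[R]_m) (th : 'rV[R]_(Dim m b)) : R :=
  - ((np%:R)^-1 * \sum_(i < np) dotp th (feat psi (xp i))) + ln (Nhat psi xq th).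

Definition emp_second (R : realType) (n nq : nat) (g : 'I_nq -> 'rV[R]_n) : 'M[R]_n :=
  (nq%:R)^-1 *: \sum_(i < nq) ((g i)^T *m g i).
Definition emp_mean (R : realType) (n nq : nat) (g : 'I_nq -> 'rV[R]_n) : 'rV[R]_n :=
  (nq%:R)^-1 *: \sum_(i < nq) g i.
Definition emp_cov (R : realType) (n nq : nat) (g : 'I_nq -> 'rV[R]_n) : 'M[R]_n :=
  (nq%:R)^-1 *: \sum_(i < nq) ((g i - emp_mean g)^T *m (g i - emp_mean g)).

Definition has_law (R : realType) (d d' : measure_display) (T : measurableType d)
  (T' : measurableType d') (Pr : probability T R) (X : T -> T')
  (P : probability T' R) : Prop :=
  measurable_fun setT X /\ forall A : set T', measurable A -> Pr (X @^-1` A) = P A.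
Definition mutually_indep (R : realType) (d d' : measure_display) (T : measurableType d)
  (T' : measurableType d') (I : finType) (Pr : probability T R) (X : I -> T -> T')
  : Prop :=
  forall A : I -> set T', (forall i, measurable (A i)) ->
    Pr (\bigcap_(i in [set: I]) (X i @^-1` A i)) =
    (\prod_(i : I) fine (Pr (X i @^-1` A i)))%:E.
Definition all_samples (T X : Type) (np nq : nat) (xp : 'I_np -> T -> X)
  (xq : 'I_nq -> T -> X) : 'I_np + 'I_nq -> T -> X :=
  fun k => match k with inl i => xp i | inr i => xq i end.

(* Main.v *)
Require Import Defs.
From HB Require Import structures.
From mathcomp Require Import all_boot all_order all_algebra.
From mathcomp Require Import all_classical all_reals all_analysis.
From mathcomp Require Import ring lra.
Import Order.TTheory GRing.Theory Num.Theory.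
Import numFieldNormedType.Exports.
Set Implicit Arguments.
Unset Strict Implicit.
Local Open Scope classical_set_scope.
Local Open Scope ring_scope.

Section Der.
Variable R : realType.
Variable n : nat.
Implicit Types (f : 'rV[R]_n -> R) (a v : 'rV[R]_n).

Lemma line_fun f a v :
  (fun h : R => h^-1 *: ((f \o shift a) (h *: v) - f a)) =
  (fun h : R => h^-1 *: (((fun h0 : R => f (h0 *: v + a)) \o shift 0) (h *: 1)
     - (fun h0 : R => f (h0 *: v + a)) 0)).
Proof.
apply/funext => h /=; rewrite scale0r add0r addr0.
by congr (_ *: (f (_ + _) - _)); congr (_ *: _); rewrite /GRing.scale /= mulr1.
Qed.

Lemma is_derive_line f a v df :
  is_derive (0:R) 1 (fun h : R => f (h *: v + a)) df <-> is_derive a v f df.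
Proof.
split=> -[H1 H2]; constructor.
- by rewrite /derivable line_fun.
- by rewrite /derive line_fun.
- by move: H1; rewrite /derivable line_fun.
- by move: H2; rewrite /derive line_fun.
Qed.

Lemma dotp_line (a v F : 'rV[R]_n) (h : R) :
  dotp (h *: v + a) F = h * dotp v F + dotp a F.
Proof.
rewrite /dotp mulr_sumr -big_split /=; apply: eq_bigr => i _.
by rewrite !mxE mulrDl mulrA.
Qed.

Lemma is_derive_affine (x al be : R) :
  is_derive x 1 (fun h : R => h * al + be) al.
Proof.
have H := is_deriveD (is_deriveM (is_derive_id x (1:R)) (is_derive_cst al x (1:R)))
  (is_derive_cst be x (1:R)).
apply: is_derive_eq H _.
by rewrite /= scaler0 add0r addr0 /GRing.scale /= mulr1.
Qed.

Lemma is_derive_dotp (F a v : 'rV[R]_n) :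
  is_derive a v (fun t => dotp t F) (dotp v F).
Proof.
apply/is_derive_line.
have -> : (fun h : R => dotp (h *: v + a) F) = (fun h => h * dotp v F + dotp a F).
  by apply/funext => h; rewrite dotp_line.
exact: is_derive_affine.
Qed.

Lemma is_derive_expdot (F a v : 'rV[R]_n) :
  is_derive a v (fun t => expR (dotp t F)) (expR (dotp a F) * dotp v F).
Proof.
apply/is_derive_line.
have -> : (fun h : R => expR (dotp (h *: v + a) F)) =
   (expR \o (fun h => h * dotp v F + dotp a F)).
  by apply/funext => h; rewrite /= dotp_line.
have H := @is_derive1_comp R expR (fun h => h * dotp v F + dotp a F) 0 _ _
  (is_derive_expR _) (is_derive_affine 0 (dotp v F) (dotp a F)).
by apply: is_derive_eq H _; rewrite mul0r add0r.
Qed.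

Section S2.
Variable nq : nat.
Variable F : 'I_nq -> 'rV[R]_n.
Definition Sf (t : 'rV[R]_n) := \sum_(i < nq) expR (dotp t (F i)).
Definition Tf (v t : 'rV[R]_n) := \sum_(i < nq) expR (dotp t (F i)) * dotp v (F i).
Definition T2 (v w t : 'rV[R]_n) :=
  \sum_(i < nq) expR (dotp t (F i)) * dotp w (F i) * dotp v (F i).

Lemma is_derive_S a v : is_derive a v Sf (Tf v a).
Proof.
have H := @is_derive_sum R _ _ nq (fun i t => expR (dotp t (F i))) a v
  (fun i => expR (dotp a (F i)) * dotp v (F i)) (fun i => is_derive_expdot _ _ _).
by move: H; rewrite fct_sumE.
Qed.

Lemma is_derive_T a v w : is_derive a w (Tf v) (T2 v w a).
Proof.
have Hi : forall i, is_derive a w (fun t => expR (dotp t (F i)) * dotp v (F i))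
    (expR (dotp a (F i)) * dotp w (F i) * dotp v (F i)).
  move=> i.
  have H := is_deriveM (is_derive_expdot (F i) a w) (is_derive_cst (dotp v (F i)) a w).
  apply: is_derive_eq H _.
  by rewrite /= scaler0 add0r /GRing.scale /= mulrC.
have H := @is_derive_sum R _ _ nq (fun i t => expR (dotp t (F i)) * dotp v (F i)) a w
  (fun i => expR (dotp a (F i)) * dotp w (F i) * dotp v (F i)) Hi.
by move: H; rewrite fct_sumE.
Qed.

Lemma S_gt0 t : (0 < nq)%N -> 0 < Sf t.
Proof.
move=> nqp; rewrite /Sf (bigD1 (Ordinal nqp)) //=.
have h1 := expR_gt0 (dotp t (F (Ordinal nqp))).
have h2 : 0 <= \sum_(i < nq | i != Ordinal nqp) expR (dotp t (F i)).
  by apply: sumr_ge0 => i _; exact: expR_ge0.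
lra.
Qed.

Lemma is_derive_lnN a v :
  is_derive a v (fun t => ln (nq%:R^-1 * Sf t)) (Tf v a / Sf a).
Proof.
case: (posnP nq) => [nq0|nqp].
  have E : forall t, Sf t = 0.
    by move=> t; rewrite /Sf big1 // => -[i hi]; exfalso; move: hi; rewrite nq0.
  have -> : (fun t => ln (nq%:R^-1 * Sf t)) = cst (ln (nq%:R^-1 * 0)).
    by apply/funext => t; rewrite E.
  rewrite E invr0 !mulr0; exact: is_derive_cst.
apply/is_derive_line.
have Hg : is_derive (0:R) 1 (fun h : R => nq%:R^-1 * Sf (h *: v + a)) (nq%:R^-1 * Tf v a).
  apply: (proj2 (is_derive_line (fun t => nq%:R^-1 * Sf t) a v _)).
  exact: (is_deriveZ (nq%:R^-1) (is_derive_S a v)).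
have g0 : 0 < nq%:R^-1 * Sf (0 *: v + a).
  by apply: mulr_gt0; [rewrite invr_gt0 ltr0n | exact: S_gt0].
have H := @is_derive1_comp R (@ln R) (fun h : R => nq%:R^-1 * Sf (h *: v + a)) 0 _ _
  (is_derive1_ln g0) Hg.
apply: is_derive_eq H _.
rewrite scale0r add0r.
have := S_gt0 a nqp; have : (0:R) < nq%:R by rewrite ltr0n.
move=> h1 h2; field; apply/andP; split; apply/lt0r_neq0 => //.
Qed.
End S2.

Section S3.
Variables (np nq : nat) (G : 'I_np -> 'rV[R]_n) (F : 'I_nq -> 'rV[R]_n).
Definition Lin (t : 'rV[R]_n) := - (np%:R^-1 * \sum_(i < np) dotp t (G i)).
Definition Lfun (t : 'rV[R]_n) := Lin t + ln (nq%:R^-1 * Sf F t).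
Definition D1 (v t : 'rV[R]_n) := Lin v + Tf F v t / Sf F t.

Lemma is_derive_Lin a v : is_derive a v Lin (Lin v).
Proof.
apply/is_derive_line.
have -> : (fun h : R => Lin (h *: v + a)) = (fun h => h * Lin v + Lin a).
  apply/funext => h; rewrite /Lin.
  under eq_bigr do rewrite dotp_line.
  rewrite big_split /= -mulr_sumr; ring.
exact: is_derive_affine.
Qed.

Lemma is_derive_Lfun a v : is_derive a v Lfun (D1 v a).
Proof.
have -> : Lfun = Lin + (fun t => ln (nq%:R^-1 * Sf F t)) by [].
exact: is_deriveD (is_derive_Lin a v) (is_derive_lnN F a v).
Qed.

Definition Hent (v w t : 'rV[R]_n) :=
  T2 F v w t / Sf F t - Tf F v t * Tf F w t / (Sf F t ^+ 2).

Lemma is_derive_D1 a v w : is_derive a w (D1 v) (Hent v w a).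
Proof.
case: (posnP nq) => [nq0|nqp].
  have E : forall u t, Sf F t = 0 /\ Tf F u t = 0 /\ T2 F v u t = 0.
    by move=> u t; rewrite /Sf /Tf /T2 !big1 // => -[i hi]; exfalso; move: hi; rewrite nq0.
  have -> : D1 v = cst (Lin v) by apply/funext => t; rewrite /D1 (proj1 (E v t)) invr0 mulr0 addr0.
  rewrite /Hent; have [-> [-> ->]] := E w a.
  rewrite invr0 !mulr0 !mul0r subr0; exact: is_derive_cst.
have -> : D1 v = cst (Lin v) + (Tf F v * (fun t => (Sf F t)^-1)) by [].
have Sa : Sf F a != 0 by apply/lt0r_neq0/S_gt0.
have HV : is_derive a w (fun t => (Sf F t)^-1) (- (Sf F a) ^- 2 *: Tf F w a).
  constructor; first by apply: derivableV => //; case: (is_derive_S F a w).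
  rewrite deriveV //; last by case: (is_derive_S F a w).
  by have [_ <-] := is_derive_S F a w.
have H := is_deriveD (is_derive_cst (Lin v) a w) (is_deriveM (is_derive_T F a v w) HV).
apply: is_derive_eq H _.
rewrite /Hent /= add0r /GRing.scale /=.
field; exact: Sa.
Qed.
End S3.
End Der.


Section LA.
Variable R : realType.

Lemma quad_disc (A B C : R) : 0 <= C ->
  (forall t, 0 <= A + 2 * t * B + t ^+ 2 * C) -> B ^+ 2 <= A * C.
Proof.
move=> C0 H; have [Cp|] := ltP 0 C.
  have := H (- B / C); set t := - B / C => h.
  have Ct : C * t = - B by rewrite /t mulrC divfK // lt0r_neq0.
  nra.
move=> Cle; have C00 : C = 0 by apply/le_anti; rewrite Cle C0.
subst C; have [B0|Bn] := eqVneq B 0; first by rewrite B0 expr0n /= mulr0.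
have := H (- (A + 1) / (2 * B)); set t := - (A + 1) / (2 * B) => h.
have Bt : 2 * t * B = - (A + 1).
  rewrite /t; field; exact: Bn.
lra.
Qed.

Lemma cs_sum N (p q : 'I_N -> R) :
  (\sum_i p i * q i) ^+ 2 <= (\sum_i p i ^+ 2) * (\sum_i q i ^+ 2).
Proof.
rewrite mulrC; apply: quad_disc; first by apply: sumr_ge0 => i _; exact: sqr_ge0.
move=> t.
have -> : \sum_i q i ^+ 2 + 2 * t * \sum_i p i * q i + t ^+ 2 * \sum_i p i ^+ 2
   = \sum_i (q i + t * p i) ^+ 2.
  rewrite !mulr_sumr -!big_split /=; apply: eq_bigr => i _; ring.
by apply: sumr_ge0 => i _; exact: sqr_ge0.
Qed.

Lemma cs_wsum N (w p : 'I_N -> R) : (forall i, 0 <= w i) ->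
  (\sum_i w i * p i) ^+ 2 <= (\sum_i w i * p i ^+ 2) * (\sum_i w i).
Proof.
move=> w0; apply: quad_disc; first by apply: sumr_ge0.
move=> t.
have -> : \sum_i w i * p i ^+ 2 + 2 * t * \sum_i w i * p i + t ^+ 2 * \sum_i w i
   = \sum_i w i * (p i + t) ^+ 2.
  rewrite !mulr_sumr -!big_split /=; apply: eq_bigr => i _; ring.
by apply: sumr_ge0 => i _; apply: mulr_ge0 => //; exact: sqr_ge0.
Qed.

Variable n : nat.
Implicit Types (x v : 'cV[R]_n) (M : 'M[R]_n).
Definition sq (x : 'cV[R]_n) := \sum_(i < n) x i ord0 ^+ 2.
Lemma sq_ge0 x : 0 <= sq x.
Proof. by apply: sumr_ge0 => i _; exact: sqr_ge0. Qed.
Lemma vnorm_cV x : vnorm x = Num.sqrt (sq x).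
Proof. by rewrite /vnorm /sq; congr Num.sqrt; apply: eq_bigr => i _; rewrite big_ord1. Qed.
Lemma vnorm_ge0 x : 0 <= vnorm x.
Proof. by rewrite vnorm_cV sqrtr_ge0. Qed.
Lemma vnorm_sq x : vnorm x ^+ 2 = sq x.
Proof. by rewrite vnorm_cV sqr_sqrtr // sq_ge0. Qed.
Lemma vnorm_le1 x : (vnorm x <= 1) = (sq x <= 1).
Proof. by rewrite vnorm_cV -{1}sqrtr1 ler_sqrt. Qed.

Lemma sq_Mx_le (M : 'M[R]_n) x : sq x <= 1 ->
  sq (M *m x) <= \sum_j \sum_k M j k ^+ 2.
Proof.
move=> hx; rewrite /sq; apply: ler_sum => j _; rewrite mxE.
apply: le_trans (cs_sum _ _) _.
rewrite -[X in _ <= X]mulr1; apply: ler_wpM2l => //.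
by apply: sumr_ge0 => k _; exact: sqr_ge0.
Qed.

Definition spec_set (M : 'M[R]_n) :=
  [set vnorm (M *m v) | v in [set v : 'cV[R]_n | vnorm v <= 1]].

Lemma sq0 : sq 0 = 0.
Proof. by rewrite /sq big1 // => i _; rewrite mxE expr0n. Qed.

Lemma spec_ub M : has_ubound (spec_set M).
Proof.
exists (Num.sqrt (\sum_j \sum_k M j k ^+ 2)) => _ [v hv <-].
rewrite vnorm_cV ler_sqrt; last by apply: sumr_ge0 => j _; apply: sumr_ge0 => k _; exact: sqr_ge0.
by apply: sq_Mx_le; rewrite -vnorm_le1.
Qed.

Lemma spec_ne M : spec_set M !=set0.
Proof. by exists (vnorm (M *m (0 : 'cV[R]_n))); exists 0 => //=; rewrite vnorm_le1 sq0. Qed.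

Lemma specnorm_ub M v : vnorm v <= 1 -> vnorm (M *m v) <= specnorm M.
Proof. by move=> hv; apply: ub_le_sup (spec_ub M) _ _; exists v. Qed.

Lemma specnorm_ge0 M : 0 <= specnorm M.
Proof.
apply: le_trans (specnorm_ub M (v := (0:'cV[R]_n)) _); first exact: vnorm_ge0.
by rewrite vnorm_le1 sq0.
Qed.

Lemma specnorm_le M K : (forall v, vnorm v <= 1 -> vnorm (M *m v) <= K) ->
  specnorm M <= K.
Proof. by move=> H; apply: ge_sup (spec_ne M) _ => _ [v hv <-]; exact: H. Qed.

Lemma sqZ c x : sq (c *: x) = c ^+ 2 * sq x.
Proof. by rewrite /sq mulr_sumr; apply: eq_bigr => i _; rewrite mxE exprMn. Qed.

Lemma vnormZ c x : vnorm (c *: x) = `|c| * vnorm x.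
Proof. by rewrite !vnorm_cV sqZ sqrtrM ?sqr_ge0 // sqrtr_sqr. Qed.

Lemma specnorm_mul M x : vnorm (M *m x) <= specnorm M * vnorm x.
Proof.
have [x0|xp] := eqVneq (vnorm x) 0.
  have X0 : x = 0.
    move: x0; rewrite vnorm_cV => /eqP; rewrite sqrtr_eq0 => hs.
    have hs0 : sq x = 0 by apply/le_anti; rewrite hs sq_ge0.
    apply/matrixP => i j; rewrite mxE (ord1 j).
    move/eqP: hs0; rewrite /sq psumr_eq0; last by move=> k _; exact: sqr_ge0.
    by move=> /allP /(_ i (mem_index_enum _)) /implyP /(_ isT); rewrite sqrf_eq0 => /eqP.
  by rewrite X0 mulmx0 !vnorm_cV sq0 sqrtr0 mulr0.
have s0 : 0 < vnorm x by rewrite lt0r xp vnorm_ge0.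
have H : vnorm (M *m ((vnorm x)^-1 *: x)) <= specnorm M.
  by apply: specnorm_ub; rewrite vnormZ ger0_norm ?invr_ge0 ?vnorm_ge0 // mulVf.
move: H; rewrite -scalemxAr vnormZ ger0_norm ?invr_ge0 ?vnorm_ge0 // => H.
by rewrite -ler_pdivrMr // mulrC.
Qed.

Section Bform.
Variables (N : nat) (w : 'I_N -> R).
Definition Bf (p q : 'I_N -> R) :=
  \sum_i w i * p i * q i - (\sum_i w i * p i) * (\sum_i w i * q i).

Lemma Bf_expand p q t :
  Bf (fun i => p i + t * q i) (fun i => p i + t * q i) =
  Bf p p + 2 * t * Bf p q + t ^+ 2 * Bf q q.
Proof.
rewrite /Bf.
have E1 : \sum_i w i * (p i + t * q i) * (p i + t * q i) =
  \sum_i w i * p i * p i + 2 * t * \sum_i w i * p i * q i + t ^+ 2 * \sum_i w i * q i * q i.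
  rewrite !mulr_sumr -!big_split /=; apply: eq_bigr => i _; ring.
have E2 : \sum_i w i * (p i + t * q i) = \sum_i w i * p i + t * \sum_i w i * q i.
  rewrite !mulr_sumr -!big_split /=; apply: eq_bigr => i _; ring.
rewrite E1 E2; ring.
Qed.

Hypothesis w0 : forall i, 0 <= w i.
Hypothesis w1 : \sum_i w i <= 1.

Lemma Bf_ge0 p : 0 <= Bf p p.
Proof.
rewrite /Bf subr_ge0.
have h := cs_wsum p w0.
have h2 : 0 <= \sum_i w i * p i ^+ 2.
  by apply: sumr_ge0 => i _; apply: mulr_ge0 => //; exact: sqr_ge0.
have h3 : 0 <= \sum_i w i by apply: sumr_ge0.
have -> : \sum_i w i * p i * p i = \sum_i w i * p i ^+ 2.
  by apply: eq_bigr => i _; rewrite expr2 mulrA.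
rewrite -expr2; apply: le_trans h _; rewrite -[X in _ <= X]mulr1; by apply: ler_wpM2l.
Qed.

Lemma Bf_cs p q : Bf p q ^+ 2 <= Bf p p * Bf q q.
Proof.
apply: quad_disc; first exact: Bf_ge0.
by move=> t; rewrite -Bf_expand; exact: Bf_ge0.
Qed.

Lemma Bf_le p : Bf p p <= \sum_i w i * p i ^+ 2.
Proof.
rewrite /Bf.
have -> : \sum_i w i * p i * p i = \sum_i w i * p i ^+ 2.
  by apply: eq_bigr => i _; rewrite expr2 mulrA.
by rewrite lerBlDr lerDl -expr2 sqr_ge0.
Qed.

Lemma Bf_linl (J : nat) (c : 'I_J -> R) (p : 'I_J -> 'I_N -> R) q :
  \sum_j c j * Bf (p j) q = Bf (fun i => \sum_j c j * p j i) q.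
Proof.
rewrite /Bf.
under eq_bigr do rewrite mulrBr.
rewrite sumrB; congr (_ - _).
  under eq_bigr do rewrite mulr_sumr.
  rewrite exchange_big /=; apply: eq_bigr => i _.
  rewrite mulr_sumr mulr_suml; apply: eq_bigr => j _; ring.
under eq_bigr do rewrite mulrA.
rewrite -mulr_suml; congr (_ * _).
under eq_bigr do rewrite mulr_sumr.
rewrite exchange_big /=; apply: eq_bigr => i _.
by rewrite mulr_sumr; apply: eq_bigr => j _; ring.
Qed.
End Bform.

Section Main.
Variables (N : nat) (a : 'I_N -> 'rV[R]_n) (w : 'I_N -> R) (C D : R).
Definition colv (j : 'I_n) := fun i => a i ord0 j.
Definition ax x := fun i => \sum_j a i ord0 j * x j ord0.
Definition Hm : 'M[R]_n := \matrix_(j, k)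
  (\sum_i w i * a i ord0 j * a i ord0 k
     - (\sum_i w i * a i ord0 k) * (\sum_i w i * a i ord0 j)).

Lemma Bf_sym p q : Bf w p q = Bf w q p.
Proof.
rewrite /Bf mulrC; congr (_ - _); apply: eq_bigr => i _; ring.
Qed.

Lemma Hx x j : (Hm *m x) j ord0 = Bf w (colv j) (ax x).
Proof.
rewrite mxE.
have -> : \sum_k Hm j k * x k ord0 = \sum_k x k ord0 * Bf w (colv k) (colv j).
  apply: eq_bigr => k _; rewrite mxE mulrC Bf_sym /Bf /colv; congr (_ * (_ - _)); exact: mulrC.
rewrite Bf_linl Bf_sym; congr (Bf _ _ _); apply/funext => i.
by rewrite /ax /colv; apply: eq_bigr => k _; rewrite mulrC.
Qed.

Lemma sqH v : sq (Hm *m v) = Bf w (ax (Hm *m v)) (ax v).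
Proof.
rewrite /sq.
have -> : \sum_j (Hm *m v) j ord0 ^+ 2 =
   \sum_j (Hm *m v) j ord0 * Bf w (colv j) (ax v).
  by apply: eq_bigr => j _; rewrite expr2 Hx.
rewrite Bf_linl; congr (Bf _ _ _); apply/funext => i.
by rewrite /ax /colv; apply: eq_bigr => k _; rewrite mulrC.
Qed.

Lemma emp_secondE j k :
  emp_second a j k = N%:R^-1 * \sum_i a i ord0 j * a i ord0 k.
Proof.
rewrite /emp_second mxE summxE; congr (_ * _); apply: eq_bigr => i _.
by rewrite mxE big_ord1 !mxE.
Qed.

Lemma quad_id x :
  N%:R^-1 * \sum_i ax x i ^+ 2 = \sum_j x j ord0 * (emp_second a *m x) j ord0.
Proof.
have -> : \sum_j x j ord0 * (emp_second a *m x) j ord0 =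
   \sum_j \sum_k \sum_i N%:R^-1 * (a i ord0 j * x j ord0 * (a i ord0 k * x k ord0)).
  apply: eq_bigr => j _; rewrite mxE mulr_sumr; apply: eq_bigr => k _.
  rewrite emp_secondE mulr_sumr mulr_suml mulr_sumr; apply: eq_bigr => i _; ring.
symmetry; under eq_bigr do rewrite exchange_big /=.
rewrite exchange_big /= mulr_sumr; apply: eq_bigr => i _.
rewrite /ax expr2 mulr_suml mulr_sumr; apply: eq_bigr => j _.
rewrite mulr_sumr mulr_sumr; apply: eq_bigr => k _; ring.
Qed.

Lemma dot_le (x y : 'cV[R]_n) :
  \sum_j x j ord0 * y j ord0 <= vnorm x * vnorm y.
Proof.
have h := cs_sum (fun j => x j ord0) (fun j => y j ord0).
rewrite !vnorm_cV -sqrtrM ?sq_ge0 //.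
apply: le_trans (ler_norm _) _.
rewrite -sqrtr_sqr ler_sqrt //; apply: mulr_ge0; exact: sq_ge0.
Qed.

Hypothesis hD : specnorm (emp_second a) <= D.

Lemma quadM x : N%:R^-1 * \sum_i ax x i ^+ 2 <= D * sq x.
Proof.
rewrite quad_id; apply: le_trans (dot_le _ _) _.
have h1 := specnorm_mul (emp_second a) x.
have h2 := vnorm_ge0 x.
have h3 := specnorm_ge0 (emp_second a).
have h5 := ler_wpM2r (sqr_ge0 (vnorm x)) hD.
rewrite -vnorm_sq; nra.
Qed.

Hypotheses (w0 : forall i, 0 <= w i) (w1 : \sum_i w i <= 1)
  (wC : forall i, w i <= C / N%:R) (C0 : 0 <= C).

Lemma Bf_bound x : Bf w (ax x) (ax x) <= C * D * sq x.
Proof.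
apply: le_trans (Bf_le _ _) _.
apply: (@le_trans _ _ (\sum_i C / N%:R * ax x i ^+ 2)).
  by apply: ler_sum => i _; apply: ler_wpM2r => //; exact: sqr_ge0.
rewrite -mulr_sumr -!mulrA.
apply: ler_wpM2l => //; exact: quadM.
Qed.

Lemma specnorm_Hm : specnorm Hm <= 2 * C * D.
Proof.
have D0 : 0 <= D := le_trans (specnorm_ge0 _) hD.
have K0 : 0 <= C * D by apply: mulr_ge0.
apply: specnorm_le => v; rewrite vnorm_le1 => hv.
set u := Hm *m v.
have hcs := Bf_cs w0 w1 (ax u) (ax v).
rewrite -sqH in hcs.
have hu := Bf_bound u; have hv' := Bf_bound v.
have hu0 := Bf_ge0 w0 w1 (ax u); have hv0 := Bf_ge0 w0 w1 (ax v).
have su0 := sq_ge0 u; have sv0 := sq_ge0 v.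
have hsq : sq u <= (C * D) ^+ 2.
  have h4 : sq u ^+ 2 <= (C * D * sq u) * (C * D * sq v).
    apply: le_trans hcs _; apply: ler_pM => //.
  have h5 : (C * D * sq u) * (C * D * sq v) <= (C * D) ^+ 2 * sq u.
    have -> : C * D * sq u * (C * D * sq v) = (C * D) ^+ 2 * sq u * sq v by ring.
    rewrite -[X in _ <= X]mulr1; apply: ler_wpM2l => //.
    by apply: mulr_ge0 => //; exact: sqr_ge0.
  have h6 := le_trans h4 h5.
  have [su|su] := eqVneq (sq u) 0; first by rewrite su sqr_ge0.
  have sup : 0 < sq u by rewrite lt0r su su0.
  by rewrite -(ler_pM2r sup); move: h6; rewrite expr2.
rewrite vnorm_cV; apply: (@le_trans _ _ (C * D)).
  by rewrite -(ger0_norm K0) -sqrtr_sqr ler_sqrt // sqr_ge0.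
nra.
Qed.
End Main.
End LA.

Lemma dotp_unit (R : realType) n (j : 'I_n) (F : 'rV[R]_n) :
  dotp (unitv R j) F = F ord0 j.
Proof.
rewrite /dotp (bigD1 j) //= big1 ?addr0.
  by rewrite /unitv !mxE !eqxx /= mul1r.
by move=> i ij; rewrite /unitv !mxE eq_sym (negbTE ij) andbF mul0r.
Qed.

Lemma prob_I (R : realType) d (T : measurableType d) (Pr : probability T R)
  (A B : set T) : measurable A -> measurable B -> Pr B = 1%E ->
  Pr (A `&` B) = Pr A.
Proof.
move=> mA mB hB; rewrite (measureDI Pr mA mB).
rewrite -[LHS]add0e; congr (_ + _)%E; symmetry.
  apply/le_anti; apply/andP; split; last exact: measure_ge0.
  have -> : (0 = Pr (~` B))%E by rewrite probability_setC // hB subee.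
  apply: le_measure; rewrite ?inE //; first exact: measurableD.
  - exact: measurableC.
Qed.
Theorem proposition5 (R : realType) (m b np nq : nat)
  (psi : R -> R -> 'rV[R]_b)
  (P Q : probability (Rm R m) R)
  (d : measure_display) (Omega : measurableType d) (Pr : probability Omega R)
  (xp : 'I_np -> Omega -> Rm R m) (xq : 'I_nq -> Omega -> Rm R m)
  (thstar : 'rV[R]_(Dim m b))
  (Cmin Cmax Cratio : R) (Cf : Etype m -> R)
  (Dmax1 Dmax2 Dmin2 deltanq : R)
  (* sampling: x_p^(i) i.i.d. ~ P, x_q^(i) i.i.d. ~ Q *)
  (hxp : forall i, has_law Pr (xp i) P)
  (hxq : forall i, has_law Pr (xq i) Q)
  (hind : mutually_indep Pr (all_samples xp xq))
  (* theta^* is the true parameter: p = q r(.; theta^* ) *)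
  (htrue : forall A : set (Rm R m), measurable A ->
     P A = (\int[Q]_(x in A) (r_model psi Q thstar x)%:E)%E)
  (* (A7) *)
  (hA7r : forall delta : 'rV[R]_(Dim m b), vnorm delta <= vnorm thstar ->
     forall x : 'rV[R]_m,
       0 < Cmin /\ Cmin <= r_model psi Q (thstar + delta) x /\
       r_model psi Q (thstar + delta) x <= Cmax)
  (hA7rhat : forall delta : 'rV[R]_(Dim m b), vnorm delta <= vnorm thstar ->
     forall (w : Omega) (x : 'rV[R]_m),
       Cratio^-1 <= rhat psi (fun i => xq i w) (thstar + delta) x /\
       rhat psi (fun i => xq i w) (thstar + delta) x <= Cratio)
  (hA7f : forall (t : Etype m) (x : 'rV[R]_m), vnorm (feat_t psi t x) <= Cf t)
  (* (A8), almost-sure part *)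
  (hA8as : exists A : set Omega, measurable A /\ Pr A = 1%E /\
     forall w, A w ->
       (forall t : Etype m,
          (nq%:R)^-1 * \sum_(i < nq) vnorm (feat_t psi t (xq i w)) <= Dmax1) /\
       specnorm (emp_second (fun i => feat psi (xq i w))) <= Dmax2 /\
       specnorm (emp_cov (fun i => feat psi (xq i w))) <= Dmax2)
  (* (A8), minimal eigenvalue on the support S *)
  (hDmin : 0 < Dmin2)
  (hA8min : exists A : set Omega, measurable A /\ ((1 - deltanq)%:E <= Pr A)%E /\
     forall w, A w ->
       Dmin2 <= lambda_min
                  (emp_cov (fun i => subvec (supp thstar) (feat psi (xq i w))))) :
  forall delta : 'rV[R]_(Dim m b), vnorm delta <= vnorm thstar ->
    exists A : set Omega, measurable A /\ ((1 - deltanq)%:E <= Pr A)%E /\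
      forall w, A w ->
        specnorm (hessian (loss psi (fun i => xp i w) (fun i => xq i w))
                          (thstar + delta))
          <= 2 * Cratio * Dmax2.
  (* your proof *)
Proof.
move=> delta hdelta.
case: hA8min => A1 [mA1 [PA1 _]].
case: hA8as => A2 [mA2 [PA2 HA2]].
exists (A1 `&` A2); split; first exact: measurableI.
split; first by rewrite prob_I.
move=> w [_ /HA2 [_ [hD _]]].
set th := thstar + delta.
set F := fun i => feat psi (xq i w).
set G := fun i => feat psi (xp i w).
have HL : loss psi (fun i => xp i w) (fun i => xq i w) = Lfun G F by [].
set S := Sf F th.
have S0 : 0 <= S by apply: sumr_ge0 => i _; exact: expR_ge0.
set wt := fun i => expR (dotp th (F i)) / S.
have Hmat : hessian (Lfun G F) th = Hm F wt.
  apply/matrixP => j k; rewrite !mxE.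
  have -> : (fun t => derive (Lfun G F) t (unitv R k)) = D1 G F (unitv R k).
    apply/funext => t; exact: (@derive_val _ _ _ _ _ _ _ (is_derive_Lfun G F t (unitv R k))).
  rewrite (@derive_val _ _ _ _ _ _ _ (is_derive_D1 G F th (unitv R k) (unitv R j))).
  have E1 : \sum_i wt i * F i ord0 j * F i ord0 k = T2 F (unitv R k) (unitv R j) th / S.
    rewrite /T2 mulr_suml; apply: eq_bigr => i _; rewrite !dotp_unit /wt; ring.
  have E2 : forall l, \sum_i wt i * F i ord0 l = Tf F (unitv R l) th / S.
    move=> l; rewrite /Tf mulr_suml; apply: eq_bigr => i _; rewrite !dotp_unit /wt; ring.
  rewrite E1 !E2 /Hent -/S -exprVn; ring.
have w0 : forall i, 0 <= wt i by move=> i; apply: divr_ge0 => //; exact: expR_ge0.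
have w1 : \sum_i wt i <= 1.
  rewrite /wt -mulr_suml -/(Sf F th) -/S.
  have [->|Sn] := eqVneq S 0; first by rewrite invr0 mulr0 ler01.
  by rewrite mulfV.
have C0 : 0 <= Cratio.
  have := (hA7rhat delta hdelta w 0).2; apply: le_trans.
  apply: divr_ge0; first exact: expR_ge0.
  apply: mulr_ge0; first by rewrite invr_ge0.
  by apply: sumr_ge0 => i _; exact: expR_ge0.
have wC : forall i, wt i <= Cratio / nq%:R.
  move=> i.
  have nqp : (0 < nq)%N by apply: leq_ltn_trans (leq0n i) (ltn_ord i).
  have Sp : 0 < S by exact: S_gt0.
  have hr : expR (dotp th (F i)) / (nq%:R^-1 * S) <= Cratio :=
    (hA7rhat delta hdelta w (xq i w)).2.
  have -> : wt i = expR (dotp th (F i)) / (nq%:R^-1 * S) / nq%:R.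
    rewrite /wt; field; apply/andP; split; [by rewrite pnatr_eq0 -lt0n | exact: lt0r_neq0].
  by apply: ler_wpM2r => //; rewrite invr_ge0.
rewrite HL Hmat; apply: specnorm_Hm => //.
Qed.
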